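(* Let $L,K,M$ be positive integers, $0<\tau_p<\tau_c$, $\beta_{i,k}>0$, $p_k>0$, $\sigma_{\mathrm{UL}}^2>0$, $\sigma_{\mathrm{DL}}^2>0$, $P_{\max,i}>0$, and $\xi_k>0$, with $\hat\xi_k=2^{\xi_k\tau_c/(\tau_c-\tau_p)}-1$. Define $c_{i,k}=\beta_{i,k}$ and $b_{i,t}=\frac{Mp_t\tau_p\beta_{i,t}^2}{\hat\xi_t(p_t\tau_p\beta_{i,t}+\sigma_{\mathrm{UL}}^2)}$, and consider the linear program in the variables $\rho_{i,t}\ge0$ ($i=1,\dots,L$, $t=1,\dots,K$): $$\min\ \sum_{t=1}^K\sum_{i=1}^L\rho_{i,t}\quad\text{s.t.}\quad \sum_{t=1}^K\sum_{i=1}^L c_{i,k}\rho_{i,t}-\sum_{i=1}^L b_{i,k}\rho_{i,k}+\sigma_{\mathrm{DL}}^2\le0\ \ \forall k,\qquad \sum_{t=1}^K\rho_{i,t}\le P_{\max,i}\ \ \forall i,$$ with Lagrangian $\mathcal{L}=\sum_{t,i}\rho_{i,t}+\sum_{k}\lambda_k\big(\sum_{t,i}c_{i,k}\rho_{i,t}-\sum_i b_{i,k}\rho_{i,k}+\sigma_{\mathrm{DL}}^2\big)+\sum_i\mu_i\big(\sum_t\rho_{i,t}-P_{\max,i}\big)$, $\lambda_k\ge0$, $\mu_i\ge0$. Assume the program is feasible, let $\{\check\rho_{i,t}\}$ be an optimal solution and $\{\check\lambda_k,\check\mu_i\}$ optimal Lagrange multipliers. Then each user $t$ is served only by base stations with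 indices in $$\mathcal{S}_t=\underset{i\in\{1,\dots,L\}}{\mathrm{argmin}}\ \left(1+\sum_{k=1}^K\check\lambda_kc_{i,k}+\check\mu_i\right)\frac{1}{b_{i,t}},$$ i.e., $\check\rho_{i,t}>0$ implies $i\in\mathcal{S}_t$. In particular, user $t$ is served by one base station if $\mathcal{S}_t$ contains only one index, and by a subset of base stations (contained in $\mathcal{S}_t$) if $\mathcal{S}_t$ contains several indices.
   Context: The linear program is the total downlink transmit power minimization for a Massive MIMO system with $L$ base stations (BSs) of $M$ antennas, $K$ single-antenna users, MRT precoding and non-coherent joint transmission; $\rho_{i,t}$ is the power BS $i$ allocates to user $t$, and user $t$ is associated with (served by) BS $i$ if and only if $\rho_{i,t}\ne0$. The first constraint family encodes that user $k$'s spectral efficiency is at least $\xi_k$, the second the per-BS peak power $P_{\max,i}$. *)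

(* Defs.v *)
From HB Require Import structures.
From mathcomp Require Import all_boot all_order all_algebra.
From mathcomp Require Import reals exp.
Set Implicit Arguments. Unset Strict Implicit. Unset Printing Implicit Defensive.
Import Order.TTheory GRing.Theory Num.Theory.
Local Open Scope ring_scope.

Section LPDefs.
Variables (R : realType) (L K : nat).

Definition xihat (tau_c tau_p : R) (xi : 'I_K -> R) (k : 'I_K) : R :=
  powR 2 (xi k * tau_c / (tau_c - tau_p)) - 1.

Definition ccoef (beta : 'I_L -> 'I_K -> R) (i : 'I_L) (k : 'I_K) : R := beta i k.

Definition bcoef (M : nat) (tau_c tau_p sigUL2 : R) (p : 'I_K -> R)
  (beta : 'I_L -> 'I_K -> R) (xi : 'I_K -> R) (i : 'I_L) (t : 'I_K) : R :=
  M%:R * p t * tau_p * beta i t ^+ 2 /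
  (xihat tau_c tau_p xi t * (p t * tau_p * beta i t + sigUL2)).

Variables (c b : 'I_L -> 'I_K -> R) (sigDL2 : R) (Pmax : 'I_L -> R).

Definition objective (rho : 'I_L -> 'I_K -> R) : R :=
  \sum_(t < K) \sum_(i < L) rho i t.

Definition se_constr (rho : 'I_L -> 'I_K -> R) (k : 'I_K) : R :=
  \sum_(t < K) \sum_(i < L) c i k * rho i t - \sum_(i < L) b i k * rho i k + sigDL2.

Definition pow_constr (rho : 'I_L -> 'I_K -> R) (i : 'I_L) : R :=
  \sum_(t < K) rho i t - Pmax i.

Definition nonneg (rho : 'I_L -> 'I_K -> R) : Prop := forall i t, 0 <= rho i t.

Definition feasible (rho : 'I_L -> 'I_K -> R) : Prop :=
  [/\ nonneg rho, (forall k, se_constr rho k <= 0) & (forall i, pow_constr rho i <= 0)].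

Definition optimal (rho : 'I_L -> 'I_K -> R) : Prop :=
  feasible rho /\ forall rho', feasible rho' -> objective rho <= objective rho'.

(* The Lagrangian (the constraint rho >= 0 is kept as the domain). *)
Definition lagrangian (rho : 'I_L -> 'I_K -> R) (lam : 'I_K -> R) (mu : 'I_L -> R) : R :=
  objective rho + \sum_(k < K) lam k * se_constr rho k
                + \sum_(i < L) mu i * pow_constr rho i.

(* d is a lower bound of the dual function g(lam,mu) = inf_{rho >= 0} L(rho,lam,mu) *)
Definition dual_lb (lam : 'I_K -> R) (mu : 'I_L -> R) (d : R) : Prop :=
  forall rho, nonneg rho -> d <= lagrangian rho lam mu.

(* (lam, mu) are optimal Lagrange multipliers: they are nonnegative and maximize
   the dual function g, i.e. g(lam',mu') <= g(lam,mu) (in the extended reals)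
   for all nonnegative (lam', mu'); expressed through lower bounds so that no
   infimum is needed: every lower bound of L(.,lam',mu') is one of L(.,lam,mu). *)
Definition dual_optimal (lam : 'I_K -> R) (mu : 'I_L -> R) : Prop :=
  [/\ (forall k, 0 <= lam k), (forall i, 0 <= mu i) &
      forall (lam' : 'I_K -> R) (mu' : 'I_L -> R),
        (forall k, 0 <= lam' k) -> (forall i, 0 <= mu' i) ->
        forall d, dual_lb lam' mu' d -> dual_lb lam mu d].

Definition serving_cost (lam : 'I_K -> R) (mu : 'I_L -> R) (i : 'I_L) (t : 'I_K) : R :=
  (1 + \sum_(k < K) lam k * c i k + mu i) / b i t.

Definition Sset (lam : 'I_K -> R) (mu : 'I_L -> R) (t : 'I_K) : {set 'I_L} :=
  [set i | [forall j, serving_cost lam mu i t <= serving_cost lam mu j t]].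

End LPDefs.

(* Main.v *)
Require Import Defs.
From HB Require Import structures.
From mathcomp Require Import all_boot all_order all_algebra.
From mathcomp Require Import reals exp.
From mathcomp Require Import ring lra.
Import Order.TTheory GRing.Theory Num.Theory.
Local Open Scope ring_scope.

Section Farkas.
Variables (R : realFieldType) (T : finType).
Definition dot (u v : T -> R) : R := \sum_k u k * v k.

Lemma dotC u v : dot u v = dot v u.
Proof. by apply: eq_bigr => k _; rewrite mulrC. Qed.

Lemma dot_lin_r u v w (r : R) :
  dot u (fun k => v k - r * w k) = dot u v - r * dot u w.
Proof.
rewrite /dot mulr_sumr -sumrB; apply: eq_bigr => k _.
by rewrite mulrBr mulrCA.
Qed.

Lemma dot_self_gt0 c : ~~ [forall k, c k == 0] -> 0 < dot c c.
Proof.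
move/forallPn => [k Hk]; rewrite /dot (bigD1 k) //=.
have H1 : 0 < c k * c k by rewrite lt_def mulf_neq0 //= -expr2 sqr_ge0.
have H2 : 0 <= \sum_(i | i != k) c i * c i.
  by apply: sumr_ge0 => i _; rewrite -expr2 sqr_ge0.
lra.
Qed.

Lemma farkas (I : eqType) (s : seq I) : uniq s -> forall (a : I -> T -> R) (c : T -> R),
  (exists y : I -> R, (forall j, 0 <= y j) /\ forall k, c k = \sum_(j <- s) y j * a j k) \/
  (exists x : T -> R, (forall j, j \in s -> dot (a j) x <= 0) /\ 0 < dot c x).
Proof.
elim: s => [_ a c | j0 s IH /andP[j0s us] a c].
  case: (boolP [forall k, c k == 0]) => [/forallP H | H].
    by left; exists (fun=> 0); split=> // k; rewrite big_nil; exact/eqP.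
  by right; exists c; split=> //; exact: dot_self_gt0.
case: (IH us a c) => [[y [y0 Hy]] | [x [Hx Hcx]]].
  left; exists (fun j => if j == j0 then 0 else y j); split.
    by move=> j; case: ifP.
  move=> k; rewrite big_cons eqxx mul0r add0r Hy.
  apply: eq_big_seq => j js; case: eqP => // ej.
  by rewrite -ej js in j0s.
have [ham|ham] := leP (dot (a j0) x) 0.
  right; exists x; split=> // j; rewrite in_cons => /orP[/eqP -> // | js].
  exact: Hx.
set al := dot (a j0) x.
have al0 : al != 0 by rewrite gt_eqF.
pose pr (v : T -> R) := fun k => v k - dot v x / al * a j0 k.
case: (IH us (fun j => pr (a j)) (pr c)) => [[y [y0 Hy]] | [x' [Hx' Hcx']]].
- left.
  pose S2 := \sum_(j <- s) y j * dot (a j) x.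
  have S2le : S2 <= 0.
    rewrite /S2 big_seq; apply: sumr_le0 => j js.
    by apply: mulr_ge0_le0; [exact: y0 | exact: Hx].
  exists (fun j => if j == j0 then (dot c x - S2) / al else y j); split.
    move=> j; case: ifP => _ //; apply: divr_ge0; first lra.
    exact: ltW.
  move=> k; rewrite big_cons eqxx.
  have HyK := Hy k; rewrite /pr /= in HyK.
  rewrite (@eq_big_seq _ _ _ _ _ _ (fun j => y j * a j k)); last first.
    move=> j js; case: eqP => // ej.
    by rewrite -ej js in j0s.
  have E : \sum_(j <- s) y j * (a j k - dot (a j) x / al * a j0 k) =
     \sum_(j <- s) y j * a j k - S2 / al * a j0 k.
    rewrite /S2 !mulr_suml -sumrB; apply: eq_bigr => j _.
    by rewrite mulrBr !mulrA.
  rewrite E in HyK.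
  rewrite !mulrBl; lra.
- right; exists (fun k => x' k - dot (a j0) x' / al * x k).
  have key : forall v, dot v (fun k => x' k - dot (a j0) x' / al * x k) = dot (pr v) x'.
    move=> v; rewrite dot_lin_r [dot (pr v) x']dotC /pr dot_lin_r.
    rewrite (dotC x' v) (dotC x' (a j0)).
    ring.
  split; last by rewrite key.
  move=> j; rewrite in_cons => /orP[/eqP -> | js].
    by rewrite dot_lin_r -/al divfK // subrr.
  rewrite key; exact: Hx'.
Qed.
End Farkas.
Arguments dot {R T}.
Arguments dotC {R T}.
Arguments farkas {R T I s}.

Section App.
Variables (R : realType) (L K : nat).
Variables (c b : 'I_L -> 'I_K -> R) (sigDL2 : R) (Pmax : 'I_L -> R).

Local Notation T := (('I_L * 'I_K) + unit)%type.
Local Notation I := ((('I_L * 'I_K) + 'I_K) + ('I_L + unit))%type.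

Definition zz (t0 : R) (r : 'I_L -> 'I_K -> R) : T -> R :=
  fun o => match o with inl p => r p.1 p.2 | inr _ => t0 end.

Definition avec (j : I) : T -> R :=
  match j with
  | inl (inl p) => fun o => if o == inl p then -1 else 0
  | inl (inr k) => fun o => match o with
                   | inl p => c p.1 k - (if p.2 == k then b p.1 k else 0)
                   | inr _ => sigDL2 end
  | inr (inl i) => fun o => match o with
                   | inl p => if p.1 == i then 1 else 0
                   | inr _ => - Pmax i end
  | inr (inr _) => fun o => match o with inl _ => 0 | inr _ => -1 end
  end.

Definition cvec (pst : R) : T -> R :=
  fun o => match o with inl _ => -1 | inr _ => pst end.

Lemma dot_zz (u : T -> R) t0 r :
  dot u (zz t0 r) = \sum_i \sum_t u (inl (i, t)) * r i t + u (inr tt) * t0.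
Proof.
rewrite /dot big_sumType /=; congr (_ + _).
  by rewrite pair_bigA; apply: eq_bigr => -[i t].
by rewrite (big_pred1 tt) // => -[].
Qed.

Lemma dPos p t0 r : dot (avec (inl (inl p))) (zz t0 r) = - r p.1 p.2.
Proof.
rewrite /dot (bigD1 (inl p)) //= eqxx big1 ?addr0 ?mulN1r //.
by move=> o /negbTE ->; rewrite mul0r.
Qed.

Lemma dSE k t0 r : dot (avec (inl (inr k))) (zz t0 r) =
  se_constr c b sigDL2 r k - sigDL2 + sigDL2 * t0.
Proof.
rewrite dot_zz /=.
have -> : \sum_i \sum_t (c (i, t).1 k - (if (i, t).2 == k then b (i, t).1 k else 0)) * r i t
   = \sum_i \sum_t c i k * r i t - \sum_i \sum_t (if t == k then b i k * r i t else 0).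
  rewrite -sumrB; apply: eq_bigr => i _; rewrite -sumrB; apply: eq_bigr => t _ /=.
  by case: eqP => _; rewrite ?subr0 ?mulrBl.
rewrite /se_constr exchange_big /=.
have -> : \sum_i \sum_t (if t == k then b i k * r i t else 0) = \sum_i b i k * r i k.
  by apply: eq_bigr => i _; rewrite -big_mkcond /= big_pred1_eq.
lra.
Qed.

Lemma dPW i t0 r : dot (avec (inr (inl i))) (zz t0 r) =
  pow_constr Pmax r i + Pmax i - Pmax i * t0.
Proof.
rewrite dot_zz /= /pow_constr (bigD1 i) //= eqxx.
rewrite [X in _ + X + _ = _]big1.
  under eq_bigr do rewrite mul1r.
  lra.
move=> j /negbTE Hj; apply: big1 => t _ /=; by rewrite Hj mul0r.
Qed.

Lemma dT u t0 r : dot (avec (inr (inr u))) (zz t0 r) = - t0.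
Proof.
rewrite dot_zz /= big1 ?add0r ?mulN1r // => i _; apply: big1 => t _; by rewrite mul0r.
Qed.

Lemma dC pst t0 r : dot (cvec pst) (zz t0 r) = pst * t0 - objective r.
Proof.
rewrite dot_zz /= /objective exchange_big /= addrC; congr (_ + _).
rewrite -sumrN; apply: eq_bigr => i _; rewrite -sumrN; apply: eq_bigr => t _.
by rewrite mulN1r.
Qed.

Lemma dot_comb (J : eqType) (s : seq J) (a : J -> T -> R) (cc : T -> R) y x :
  (forall o, cc o = \sum_(j <- s) y j * a j o) ->
  dot cc x = \sum_(j <- s) y j * dot (a j) x.
Proof.
move=> H; rewrite /dot.
under eq_bigr do rewrite H mulr_suml.
rewrite exchange_big; apply: eq_bigr => j _; rewrite mulr_sumr.
by apply: eq_bigr => o _; rewrite mulrA.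
Qed.

Lemma strong_dual rho : optimal c b sigDL2 Pmax rho ->
  exists lam' mu', [/\ (forall k, 0 <= lam' k), (forall i, 0 <= mu' i) &
      dual_lb c b sigDL2 Pmax lam' mu' (objective rho)].
Proof.
move=> [Hfeas Hopt]; set pst := objective rho.
case: (farkas (index_enum_uniq I) avec (cvec pst)) => [[y [y0 Hy]] | [x [Hx Hcx]]].
  exists (fun k => y (inl (inr k))), (fun i => y (inr (inl i))); split=> //.
  move=> r r0.
  have e1 : \sum_(p : 'I_L * 'I_K) y (inl (inl p)) * dot (avec (inl (inl p))) (zz 1 r)
     = \sum_(p : 'I_L * 'I_K) y (inl (inl p)) * - r p.1 p.2.
    by apply: eq_bigr => p _; rewrite dPos.
  have e2 : \sum_(k : 'I_K) y (inl (inr k)) * dot (avec (inl (inr k))) (zz 1 r)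
     = \sum_(k : 'I_K) y (inl (inr k)) * se_constr c b sigDL2 r k.
    by apply: eq_bigr => k _; rewrite dSE mulr1 subrK.
  have e3 : \sum_(i : 'I_L) y (inr (inl i)) * dot (avec (inr (inl i))) (zz 1 r)
     = \sum_(i : 'I_L) y (inr (inl i)) * pow_constr Pmax r i.
    by apply: eq_bigr => i _; rewrite dPW mulr1 addrK.
  have e4 : \sum_(u : unit) y (inr (inr u)) * dot (avec (inr (inr u))) (zz 1 r)
     = \sum_(u : unit) y (inr (inr u)) * - 1.
    by apply: eq_bigr => u _; rewrite dT.
  have E : pst * 1 - objective r =
    \sum_(p : 'I_L * 'I_K) y (inl (inl p)) * - r p.1 p.2 +
    \sum_(k : 'I_K) y (inl (inr k)) * se_constr c b sigDL2 r k +
    (\sum_(i : 'I_L) y (inr (inl i)) * pow_constr Pmax r i +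
     \sum_(u : unit) y (inr (inr u)) * - 1).
    rewrite -dC (@dot_comb _ _ _ _ y _ Hy) !big_sumType.
    by rewrite e1 e2 e3 e4.
  have A : \sum_(p : 'I_L * 'I_K) y (inl (inl p)) * - r p.1 p.2 <= 0.
    by apply: sumr_le0 => p _; apply: mulr_ge0_le0; rewrite ?y0 // oppr_le0 r0.
  have D : \sum_(u : unit) y (inr (inr u)) * - 1 <= 0.
    by apply: sumr_le0 => p _; apply: mulr_ge0_le0; rewrite ?y0 // oppr_le0.
  rewrite /lagrangian; lra.
exfalso.
pose t0 := x (inr tt); pose r i t := x (inl (i, t)).
have ex v : dot v x = dot v (zz t0 r).
  by apply: eq_bigr => -[[i t]|[]].
have r0 : forall i t, 0 <= r i t.
  move=> i t; have := Hx (inl (inl (i, t))) (mem_index_enum _).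
  by rewrite ex dPos oppr_le0.
have t00 : 0 <= t0.
  by have := Hx (inr (inr tt)) (mem_index_enum _); rewrite ex dT oppr_le0.
have Hc := Hcx; rewrite ex dC in Hc.
have [t0e|t0p] := eqVneq t0 0.
  have : 0 <= objective r.
    by apply: sumr_ge0 => t _; apply: sumr_ge0 => i _.
  rewrite t0e in Hc; lra.
have t0gt : 0 < t0 by rewrite lt_def t0p.
pose rr i t := r i t / t0.
have scl v : dot v (zz 1 rr) = dot v (zz t0 r) / t0.
  rewrite !dot_zz mulrDl mulr1 mulfK // mulr_suml; congr (_ + _).
  apply: eq_bigr => i _; rewrite mulr_suml; apply: eq_bigr => t _.
  by rewrite /rr mulrA.
have frr : feasible c b sigDL2 Pmax rr.
  split.
  - by move=> i t; rewrite /rr divr_ge0 // ltW.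
  - move=> k; have := dSE k 1 rr; rewrite mulr1 subrK => <-.
    rewrite scl -ex; have := Hx (inl (inr k)) (mem_index_enum _).
    by move=> H; rewrite mulrC pmulr_rle0 ?invr_gt0.
  - move=> i; have := dPW i 1 rr; rewrite mulr1 addrK => <-.
    rewrite scl -ex; have := Hx (inr (inl i)) (mem_index_enum _).
    by move=> H; rewrite mulrC pmulr_rle0 ?invr_gt0.
have := Hopt _ frr.
have := dC pst 1 rr; rewrite scl -ex mulr1 => E.
have : 0 < dot (cvec pst) x / t0 by rewrite divr_gt0.
rewrite -/pst; lra.
Qed.


Definition pert (r : 'I_L -> 'I_K -> R) (j : 'I_L) (t' : 'I_K) (s : R) :=
  fun i t => r i t + (if (i == j) && (t == t') then s else 0).

Lemma dot_pert u r j t' s :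
  dot u (zz 1 (pert r j t' s)) = dot u (zz 1 r) + s * u (inl (j, t')).
Proof.
rewrite /dot (bigD1 (inl (j, t'))) //= [in RHS](bigD1 (inl (j, t'))) //=.
have -> : \sum_(o | o != inl (j, t')) u o * zz 1 (pert r j t' s) o =
          \sum_(o | o != inl (j, t')) u o * zz 1 r o.
  apply: eq_bigr => -[[i t]|[]] // H; rewrite /= /pert.
  have -> : (i == j) && (t == t') = false.
    apply/negbTE; apply: contra H => /andP[/eqP-> /eqP->]; done.
  by rewrite addr0.
rewrite /pert !eqxx /=; ring.
Qed.

Lemma lag_dot r lam mu : lagrangian c b sigDL2 Pmax r lam mu =
  - dot (cvec 0) (zz 1 r) + \sum_k lam k * dot (avec (inl (inr k))) (zz 1 r)
  + \sum_i mu i * dot (avec (inr (inl i))) (zz 1 r).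
Proof.
rewrite /lagrangian dC mul0r sub0r opprK; congr (_ + _ + _).
  by apply: eq_bigr => k _; rewrite dSE mulr1 subrK.
by apply: eq_bigr => i _; rewrite dPW mulr1 addrK.
Qed.

Lemma lag_pert r lam mu j t' s : lagrangian c b sigDL2 Pmax (pert r j t' s) lam mu =
  lagrangian c b sigDL2 Pmax r lam mu + s * (1 + \sum_k lam k * avec (inl (inr k)) (inl (j, t'))
     + \sum_i mu i * avec (inr (inl i)) (inl (j, t'))).
Proof.
rewrite !lag_dot dot_pert.
under eq_bigr do rewrite dot_pert mulrDr.
under [X in _ + _ + X = _]eq_bigr do rewrite dot_pert mulrDr.
rewrite !big_split /=.
have -> : \sum_k lam k * (s * avec (inl (inr k)) (inl (j, t'))) =
   s * \sum_k lam k * avec (inl (inr k)) (inl (j, t')).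
  by rewrite mulr_sumr; apply: eq_bigr => k _; rewrite mulrCA.
have -> : \sum_i mu i * (s * avec (inr (inl i)) (inl (j, t'))) =
   s * \sum_i mu i * avec (inr (inl i)) (inl (j, t')).
  by rewrite mulr_sumr; apply: eq_bigr => k _; rewrite mulrCA.
ring.
Qed.

Lemma Aeq lam mu j t :
  1 + \sum_k lam k * avec (inl (inr k)) (inl (j, t))
     + \sum_i mu i * avec (inr (inl i)) (inl (j, t)) =
  1 + \sum_k lam k * c j k + mu j - lam t * b j t.
Proof.
rewrite /=.
under eq_bigr do rewrite mulrBr.
rewrite sumrB.
have -> : \sum_k lam k * (if t == k then b j k else 0) = lam t * b j t.
  rewrite (bigD1 t) //= eqxx big1 ?addr0 // => k Hk.
  by rewrite eq_sym (negbTE Hk) mulr0.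
have -> : \sum_i mu i * (if j == i then 1 else 0) = mu j.
  rewrite (bigD1 j) //= eqxx mulr1 big1 ?addr0 // => k Hk.
  by rewrite eq_sym (negbTE Hk) mulr0.
lra.
Qed.

End App.

Theorem theorem3 (R : realType) (L K M : nat)
  (tau_p tau_c sigUL2 sigDL2 : R) (beta : 'I_L -> 'I_K -> R) (p xi : 'I_K -> R)
  (Pmax : 'I_L -> R)
  (hL : (0 < L)%N) (hK : (0 < K)%N) (hM : (0 < M)%N)
  (htp : 0 < tau_p) (htc : tau_p < tau_c)
  (hbeta : forall i k, 0 < beta i k) (hp : forall k, 0 < p k)
  (hUL : 0 < sigUL2) (hDL : 0 < sigDL2) (hP : forall i, 0 < Pmax i)
  (hxi : forall k, 0 < xi k)
  (rho : 'I_L -> 'I_K -> R) (lam : 'I_K -> R) (mu : 'I_L -> R) :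
  let c := ccoef beta in
  let b := bcoef M tau_c tau_p sigUL2 p beta xi in
  (exists rho0, feasible c b sigDL2 Pmax rho0) ->
  optimal c b sigDL2 Pmax rho ->
  dual_optimal c b sigDL2 Pmax lam mu ->
  forall (t : 'I_K) (i : 'I_L), 0 < rho i t -> i \in Sset c b lam mu t.
Proof.
move=> c b _ Hopt [l0 m0 Hd] t i Hrho.
have bpos : forall j, 0 < b j t.
  move=> j; rewrite /b /bcoef.
  have e0 : 0 < xi t * tau_c / (tau_c - tau_p).
    by rewrite divr_gt0 ?subr_gt0 // mulr_gt0 // (lt_trans htp htc).
  have xh : 0 < xihat tau_c tau_p xi t.
    have h12 : (1:R) < 2 by lra.
    have h02 : (0:R) < 2 by lra.
    rewrite /xihat subr_gt0 lt_neqAle eq_sym powR_eq1 (gt_eqF h12) (lt_gtF h02) (gt_eqF e0) /=.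
    rewrite -{1}(powRr0 2); apply: ler_powR; [exact: ltW | exact: ltW].
  apply: divr_gt0; first by rewrite !mulr_gt0 ?ltr0n ?exprn_gt0.
  by rewrite mulr_gt0 // addr_gt0 // !mulr_gt0.
have [lam' [mu' [l0' m0' Hlb]]] := @strong_dual R L K c b sigDL2 Pmax rho Hopt.
have Hl := Hd lam' mu' l0' m0' _ Hlb.
move: Hopt => [[rn Hse Hpw] _].
have Lle : lagrangian c b sigDL2 Pmax rho lam mu <= objective rho.
  rewrite /lagrangian.
  have h1 : \sum_k lam k * se_constr c b sigDL2 rho k <= 0.
    by apply: sumr_le0 => k _; apply: mulr_ge0_le0.
  have h2 : \sum_j mu j * pow_constr Pmax rho j <= 0.
    by apply: sumr_le0 => k _; apply: mulr_ge0_le0.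
  lra.
have Apos : forall j, 0 <= 1 + \sum_k lam k * c j k + mu j - lam t * b j t.
  move=> j; have := Hl (@pert R L K rho j t 1).
  rewrite lag_pert Aeq mul1r => H; suff: objective rho <=
    lagrangian c b sigDL2 Pmax rho lam mu + (1 + \sum_k lam k * c j k + mu j - lam t * b j t) by lra.
  apply: H => i' t'; rewrite /pert; case: ifP => _; rewrite ?addr0 //.
  by rewrite addr_ge0.
have Aneg : 1 + \sum_k lam k * c i k + mu i - lam t * b i t <= 0.
  have := Hl (@pert R L K rho i t (- rho i t)).
  rewrite lag_pert Aeq => H.
  have H' : objective rho <= lagrangian c b sigDL2 Pmax rho lam mu +
     - rho i t * (1 + \sum_k lam k * c i k + mu i - lam t * b i t).
    apply: H => i' t'; rewrite /pert; case: ifP => [/andP[/eqP-> /eqP->]|_].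
      by rewrite subrr.
    by rewrite addr0.
  have : 0 <= - rho i t * (1 + \sum_k lam k * c i k + mu i - lam t * b i t) by lra.
  by rewrite mulNr oppr_ge0 pmulr_rle0.
rewrite inE; apply/forallP => j; rewrite /serving_cost.
apply: (@le_trans _ _ (lam t)).
  by rewrite ler_pdivrMr //; lra.
by rewrite ler_pdivlMr //; have := Apos j; lra.
Qed.
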